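(* Let $n\ge 5$. If there exists a listing $\pi_0,\ldots,\pi_{n!-1}$ of all permutations of $\{1,\ldots,n\}$ (written as words) such that consecutive permutations differ by interchanging the symbols in two adjacent positions and $\pi_{i+n!/2}$ is the reversal of $\pi_i$ for all $0\le i<n!/2$, then $n\equiv 0$ or $1 \pmod 4$.
   Context: The reversal of a word $a_1a_2\cdots a_n$ is $a_na_{n-1}\cdots a_1$. *)

(* Defs.v *)
From mathcomp Require Import all_boot.
Set Implicit Arguments. Unset Strict Implicit. Unset Printing Implicit Defensive.

Definition is_perm_word (n : nat) (w : seq nat) : bool := perm_eq w (iota 1 n).

Definition swap_adj (k : nat) (w : seq nat) : seq nat :=
  take k w ++ [:: nth 0 w k.+1; nth 0 w k] ++ drop k.+2 w.

Definition adj_transp (w w' : seq nat) : Prop :=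
  exists2 k, k.+1 < size w & w' = swap_adj k w.

Definition reversal_symmetric_listing (n : nat) (L : seq (seq nat)) : Prop :=
  [/\ size L = n`!, uniq L, all (is_perm_word n) L,
      (forall i, i.+1 < n`! -> adj_transp (nth [::] L i) (nth [::] L i.+1))
    & (forall i, i < n`! %/ 2 -> nth [::] L (i + n`! %/ 2) = rev (nth [::] L i))].

(* Main.v *)
Require Import Defs.
From mathcomp Require Import all_boot.
From mathcomp Require Import zify.

Fixpoint inv (w : seq nat) : nat :=
  if w is x :: s then count (fun y => y < x) s + inv s else 0.
Fixpoint ninv (w : seq nat) : nat :=
  if w is x :: s then count (fun y => x < y) s + ninv s else 0.

Lemma inv_rcons s x : inv (rcons s x) = inv s + count (fun y => x < y) s.
Proof.
elim: s => [|y s IH] //=. rewrite IH -cats1 count_cat /=. lia.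
Qed.

Lemma inv_rev w : inv (rev w) = ninv w.
Proof.
elim: w => [|x s IH] //=. rewrite rev_cons inv_rcons IH count_rev. lia.
Qed.

Lemma cnt x s : x \notin s -> count (fun y => y < x) s + count (fun y => x < y) s = size s.
Proof.
elim: s => [|y s IH] //=. rewrite in_cons negb_or => /andP[Hxy Hs].
rewrite -IH //. case: ltngtP Hxy => //= _ _; lia.
Qed.

Lemma inv_ninv w : uniq w -> inv w + ninv w = 'C(size w, 2).
Proof.
elim: w => [|x s IH] //= /andP[Hx Hs]. rewrite binS bin1.
have := @cnt x s Hx. move: (IH Hs) => <- <-. lia.
Qed.

Lemma swap_count p k w : k.+1 < size w -> count p (swap_adj k w) = count p w.
Proof.
elim: w k => [|x w IH] [|k] //=.
- case: w IH => [|y d] //= _ _. rewrite /swap_adj /= drop0. lia.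
- move=> H. rewrite /swap_adj /= -(IH k) //.
Qed.

Lemma swap_inv k w : k.+1 < size w -> nth 0 w k != nth 0 w k.+1 ->
  odd (inv (swap_adj k w)) = ~~ odd (inv w).
Proof.
elim: w k => [|x w IH] [|k] //=.
- case: w IH => [|y d] //= _ _. rewrite /swap_adj /= drop0 => Hne.
  rewrite !oddD. case: ltngtP Hne => //= _ _; case: (odd _); case: (odd _); case: (odd _) => //.
- move=> H Hne.
  rewrite /= swap_count // !oddD IH //. by case: (odd _); case: (odd _).
Qed.

Lemma fin n : ~~ odd ((n * n.-1) %/ 2) -> (n %% 4 == 0) || (n %% 4 == 1).
Proof.
rewrite (divn_eq n 4). have : n %% 4 < 4 by rewrite ltn_mod.
move: (n %/ 4) (n %% 4) => q r.
case: r => [|[|[|[|r]]]] // _.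
- by rewrite addn0 modnMl.
- by rewrite modnMDl.
- rewrite (_ : (q * 4 + 2) * (q * 4 + 2).-1 = (q*q*8 + q*6 + 1) * 2); last by rewrite -subn1; nia.
  by rewrite mulnK // !oddD !oddM /= !andbF.
- rewrite (_ : (q * 4 + 3) * (q * 4 + 3).-1 = (q*q*8 + q*10 + 3) * 2); last by rewrite -subn1; nia.
  by rewrite mulnK // !oddD !oddM /= !andbF.
Qed.

Theorem proposition2 (n : nat) :
  5 <= n ->
  (exists L : seq (seq nat), reversal_symmetric_listing n L) ->
  (n %% 4 == 0) || (n %% 4 == 1).
Proof.
move=> Hn [L [HS Hu Hall Hadj Hrev]].
set N := n`! in HS Hadj Hrev.
have H4 : 4 %| N by apply: dvdn_fact; lia.
have HN : 0 < N %/ 2 < N by have := fact_gt0 n; rewrite -/N; lia.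
have Hperm : forall i, i < N -> is_perm_word n (nth [::] L i).
  move=> i Hi; apply: (allP Hall); by rewrite mem_nth // HS.
have Huniq : forall i, i < N -> uniq (nth [::] L i).
  move=> i /Hperm Hp. by rewrite (perm_uniq Hp) iota_uniq.
have chain : forall i, i <= N %/ 2 ->
  odd (inv (nth [::] L i)) = odd (inv (nth [::] L 0)) (+) odd i.
  elim=> [|i IH] Hi; first by rewrite addbF.
  have [k Hk ->] := Hadj i ltac:(lia).
  rewrite swap_inv //; last first.
    rewrite nth_uniq //. all: try lia. all: try exact: (ltnW Hk). apply: Huniq; lia.
have := chain _ (leqnn _). rewrite -{1}(add0n (N %/ 2)) Hrev; last lia.
rewrite inv_rev.
have Hev : odd (N %/ 2) = false.
  move: H4 => /dvdnP[q ->]. 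
  rewrite (_ : q * 4 = (2 * q) * 2) ?mulnK ?odd_mul //; lia.
rewrite Hev addbF.
have := @inv_ninv _ (Huniq 0 ltac:(lia)).
have Hsz : size (nth [::] L 0) = n.
  by rewrite (perm_size (Hperm 0 ltac:(lia))) size_iota.
rewrite Hsz bin2 -divn2.
move: (inv _) (ninv _) => a b Hab Hm.
have H0 : ~~ odd ((n * n.-1) %/ 2).
  by rewrite -Hab oddD Hm; case: (odd a).
  exact: fin.
Qed.
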